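(* Let $g,h$ be complex-valued functions on the positive integers such that $g(n),h(n)=O(e^{cn})$ for some $c\ge0$. Define finite differences by $\Delta^0h(j)=h(j)$ and $\Delta^mh(j)=\Delta^{m-1}h(j+1)-\Delta^{m-1}h(j)$ for $m\ge1$, and let $G(z)=\sum_{n=1}^\infty g(n)z^{n-1}$. Then there is a disc centred at $z=0$ on which $$\sum_{n=1}^\infty g(n)h(n)z^{n-1}=\sum_{m=0}^\infty G^{(m)}(z)\,\Delta^mh(1)\,\frac{z^m}{m!}.$$ Similarly, if $g,h$ are complex-valued functions on the non-negative integers with $g(n),h(n)=O(e^{cn})$ and $\tilde G(z)=\sum_{n=0}^\infty g(n)z^n$, then on some disc centred at $0$, $$\sum_{n=0}^\infty g(n)h(n)z^n=\sum_{m=0}^\infty\tilde G^{(m)}(z)\,\Delta^mh(0)\,\frac{z^m}{m!}.$$ *)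

(* Defs.v *)
From Stdlib Require Import Reals Arith.
From Coquelicot Require Import Coquelicot.
Open Scope R_scope.

Fixpoint fdiff (m : nat) (h : nat -> C) (j : nat) : C :=
  match m with
  | O => h j
  | S m' => Cminus (fdiff m' h (S j)) (fdiff m' h j)
  end.

Definition bigO_exp (c : R) (f : nat -> C) : Prop :=
  exists K : R, exists N : nat, forall n : nat, (N <= n)%nat ->
    Cmod (f n) <= K * exp (c * INR n).

Definition Cp (z : C) (n : nat) : C := @pow_n C_Ring z n.

(* Main.v *)
Require Import Defs.
From Stdlib Require Import Reals Arith.
From Coquelicot Require Import Coquelicot.
From Stdlib Require Import Lia Lra Psatz ClassicalEpsilon FunctionalExtensionality.
Open Scope R_scope.

Fixpoint binom (n k : nat) : nat :=
  match n, k with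
  | _, O => 1%nat
  | O, S _ => O
  | S n', S k' => (binom n' k' + binom n' (S k'))%nat
  end.

Lemma binom_0r n : binom n 0 = 1%nat.
Proof. destruct n; reflexivity. Qed.

Lemma binom_big n : forall k, (n < k)%nat -> binom n k = O.
Proof.
  induction n as [|n IH]; intros k Hk; destruct k as [|k]; try lia; simpl; auto.
  rewrite !IH; lia.
Qed.

Lemma binom_absorb n : forall k, (S k * binom (S n) (S k) = S n * binom n k)%nat.
Proof.
  induction n as [|n IH]; intros k.
  - destruct k; simpl; lia.
  - change (binom (S (S n)) (S k)) with (binom (S n) k + binom (S n) (S k))%nat.
    destruct k as [|k].
    + specialize (IH 0%nat). rewrite !binom_0r in *. lia.
    + pose proof (IH k) as H1. pose proof (IH (S k)) as H2.
      change (binom (S n) (S k)) with (binom n k + binom n (S k))%nat in *.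
      nia.
Qed.

Lemma binom_fact n k : (binom (n + k) k * fact k * fact n = fact (n + k))%nat.
Proof.
  induction k as [|k IH].
  - rewrite binom_0r, Nat.add_0_r. simpl. lia.
  - replace (n + S k)%nat with (S (n + k)) by lia.
    change (fact (S k)) with (S k * fact k)%nat.
    change (fact (S (n+k))) with (S (n+k) * fact (n+k))%nat.
    pose proof (binom_absorb (n+k) k) as H. rewrite <- IH.
    replace (binom (S (n + k)) (S k) * (S k * fact k) * fact n)%nat
      with ((S k * binom (S (n + k)) (S k)) * fact k * fact n)%nat by ring.
    rewrite H. ring.
Qed.

Section Pascal.
Context {K : Ring} (cast : nat -> K).
Hypothesis cast_plus : forall a b, cast (a + b)%nat = plus (cast a) (cast b).
Hypothesis cast_0 : cast O = zero.

Lemma sum_front {G : AbelianMonoid} (a : nat -> G) n :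
  sum_n a (S n) = plus (a O) (sum_n (fun k => a (S k)) n).
Proof.
  induction n as [|n IH].
  - rewrite sum_Sn, !sum_O. reflexivity.
  - rewrite sum_Sn, IH, sum_Sn. rewrite plus_assoc. reflexivity.
Qed.

Lemma sum_zero_tail {G : AbelianMonoid} (a : nat -> G) N M :
  (forall m, (N < m)%nat -> a m = zero) -> (N <= M)%nat -> sum_n a M = sum_n a N.
Proof.
  intros Hz HNM. induction HNM as [|M HNM IH]; [reflexivity|].
  rewrite sum_Sn, IH, Hz by lia. apply plus_zero_r.
Qed.

Lemma pascal_sum (u : nat -> K) (N : nat) :
  sum_n (fun m => mult (cast (binom (S N) m)) (u m)) (S N) =
  plus (sum_n (fun m => mult (cast (binom N m)) (u (S m))) N)
       (sum_n (fun m => mult (cast (binom N m)) (u m)) N).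
Proof.
  set (f := fun m => match m with O => zero | S m' => mult (cast (binom N m')) (u m) end).
  assert (E1 : sum_n (fun m => mult (cast (binom N m)) (u (S m))) N = sum_n f (S N)).
  { rewrite sum_front. simpl. rewrite plus_zero_l. reflexivity. }
  assert (E2 : sum_n (fun m => mult (cast (binom N m)) (u m)) N =
               sum_n (fun m => mult (cast (binom N m)) (u m)) (S N)).
  { symmetry. apply sum_zero_tail; [|lia]. intros m Hm.
    rewrite binom_big by lia. rewrite cast_0. apply mult_zero_l. }
  rewrite E1, E2, <- sum_n_plus. apply sum_n_ext. intros [|m].
  - simpl. rewrite plus_zero_l, binom_0r. reflexivity.
  - simpl. rewrite cast_plus, mult_distr_r. reflexivity.
Qed.
End Pascal.

Definition castC (n : nat) : C := RtoC (INR n).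
Lemma castC_plus a b : castC (a + b)%nat = plus (castC a) (castC b).
Proof. unfold castC. rewrite plus_INR. apply RtoC_plus. Qed.
Lemma castC_0 : castC O = zero.
Proof. reflexivity. Qed.

Lemma newton (h : nat -> C) N : forall j,
  h (N + j)%nat = sum_n (fun m => mult (castC (binom N m)) (fdiff m h j)) N.
Proof.
  induction N as [|N IH]; intros j.
  - rewrite sum_O. simpl. unfold castC. simpl. change (mult (RtoC 1) (h j)) with (Cmult 1 (h j)).
    rewrite Cmult_1_l. reflexivity.
  - rewrite (pascal_sum castC castC_plus castC_0).
    replace (S N + j)%nat with (N + S j)%nat by lia.
    rewrite IH, <- sum_n_plus. apply sum_n_ext. intros m.
    rewrite <- mult_distr_l. f_equal. simpl. change (plus ?a ?b) with (Cplus a b).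
    unfold Cminus. ring.
Qed.

Lemma binom_sum (x : R) N :
  (1 + x) ^ N = sum_n (fun m => INR (binom N m) * x ^ m) N.
Proof.
  induction N as [|N IH].
  - rewrite sum_O. simpl. ring.
  - pose proof (pascal_sum (K:=R_Ring) INR plus_INR eq_refl (fun m => x ^ m) N) as P.
    change (sum_n (fun m => mult (INR (binom (S N) m)) (x ^ m)) (S N) =
       plus (sum_n (fun m => mult (INR (binom N m)) (x ^ (S m))) N)
            (sum_n (fun m => mult (INR (binom N m)) (x ^ m)) N)) in P.
    change (sum_n (fun m => mult (INR (binom (S N) m)) (x ^ m)) (S N)) with
      (sum_n (fun m => INR (binom (S N) m) * x ^ m) (S N)) in P.
    rewrite P. clear P.
    rewrite (sum_n_ext (fun m => mult (INR (binom N m)) (x ^ (S m)))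
                       (fun m => mult x (INR (binom N m) * x ^ m))).
    2: { intros m. simpl. change (mult ?a ?b) with (a * b). ring. }
    rewrite sum_n_mult_l. change (mult ?a ?b) with (a * b).
    simpl pow. rewrite IH. change (plus ?a ?b) with (a + b).
    set (S := sum_n (fun m => INR (binom N m) * x ^ m) N).
    change ((1 + x) * S = x * S + S). ring.
Qed.

Lemma Cp_S z n : Cp z (S n) = Cmult z (Cp z n).
Proof. reflexivity. Qed.
Lemma Cp_0 z : Cp z O = RtoC 1.
Proof. reflexivity. Qed.
Lemma Cmod_Cp z n : Cmod (Cp z n) = Cmod z ^ n.
Proof.
  induction n as [|n IH]; [rewrite Cp_0; apply Cmod_1|].
  rewrite Cp_S, Cmod_mult, IH. reflexivity.
Qed.
Lemma Cp_plus z n m : Cp z (n + m) = Cmult (Cp z n) (Cp z m).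
Proof. unfold Cp. exact (pow_n_plus (K:=C_Ring) z n m). Qed.

Lemma fdiff_shift h m : forall j, fdiff m (fun n => h (S n)) j = fdiff m h (S j).
Proof. induction m as [|m IH]; intros j; simpl; [reflexivity|]. rewrite !IH. reflexivity. Qed.

Lemma Cmod_minus_le a b : Cmod (Cminus a b) <= Cmod a + Cmod b.
Proof. unfold Cminus. rewrite <- (Cmod_opp b). apply Cmod_triangle. Qed.

Lemma fdiff_bound h Kh A : 1 <= A -> (forall n, Cmod (h n) <= Kh * A ^ n) ->
  forall m j, Cmod (fdiff m h j) <= Kh * 2 ^ m * A ^ (j + m).
Proof.
  intros HA Hh.
  assert (HK : 0 <= Kh).
  { specialize (Hh O). simpl in Hh. pose proof (Cmod_ge_0 (h O)). lra. }
  induction m as [|m IH]; intros j.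
  - simpl. rewrite Nat.add_0_r. specialize (Hh j). lra.
  - simpl fdiff. eapply Rle_trans; [apply Cmod_minus_le|].
    pose proof (IH (S j)) as H1. pose proof (IH j) as H2.
    replace (S j + m)%nat with (j + S m)%nat in H1 by lia.
    assert (HAp : A ^ (j + m) <= A ^ (j + S m)).
    { replace (j + S m)%nat with (S (j+m)) by lia. simpl.
      pose proof (pow_le A (j+m) ltac:(lra)). nra. }
    assert (H2m : 0 <= 2 ^ m) by (apply pow_le; lra).
    change (2 ^ S m) with (2 * 2 ^ m).
    assert (0 <= Kh * 2 ^ m) by (apply Rmult_le_pos; lra).
    set (P := A ^ (j + S m)) in *. set (Q := A ^ (j + m)) in *. set (T := Kh * 2 ^ m) in *.
    assert (T * Q <= T * P) by (apply Rmult_le_compat_l; lra).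
    replace (Kh * (2 * 2 ^ m) * P) with (2 * (T * P)) by (unfold T; ring). lra.
Qed.

Lemma ex_series_n2 q : 0 <= q < 1 -> ex_series (fun n => INR n ^ 2 * q ^ n).
Proof.
  intros Hq.
  set (a := fun _ : nat => 1).
  assert (Ha : CV_radius a = 1).
  { replace (Finite 1) with (Finite (/ 1)) by (f_equal; field).
    apply CV_radius_finite_DAlembert; [intros; unfold a; lra|lra|].
    unfold a. eapply is_lim_seq_ext; [|apply is_lim_seq_const].
    intros n. simpl. rewrite Rdiv_1_r. rewrite Rabs_R1. reflexivity. }
  assert (Hin : Rbar_lt (Rabs q) (CV_radius (PS_derive_n 2 a))).
  { rewrite CV_radius_derive_n, Ha. simpl. rewrite Rabs_pos_eq; lra. }
  pose proof (CV_disk_inside _ _ Hin) as Hs.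
  apply (ex_series_le (K:=R_AbsRing) (V:=R_CompleteNormedModule)) with (2:=Hs).
  intros n. clear Hs Hin Ha. unfold PS_derive_n, a.
  change (norm (INR n ^ 2 * q ^ n)) with (Rabs (INR n ^ 2 * q ^ n)).
  replace (n + 2)%nat with (S (S n)) by lia.
  change (fact (S (S n))) with (S (S n) * (S n * fact n))%nat.
  rewrite !mult_INR.
  assert (0 < INR (fact n)) by (apply lt_0_INR, lt_O_fact).
  pose proof (pow_le q n (proj1 Hq)).
  rewrite !Rabs_pos_eq.
  - replace (INR (S (S n)) * (INR (S n) * INR (fact n)) / INR (fact n) * 1)
      with (INR (S (S n)) * INR (S n)) by (field; lra).
    rewrite !S_INR. pose proof (pos_INR n). clear -H0 H1. nra.
  - replace (INR (S (S n)) * (INR (S n) * INR (fact n)) / INR (fact n) * 1)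
      with (INR (S (S n)) * INR (S n)) by (field; lra).
    apply Rmult_le_pos; [apply Rmult_le_pos; apply pos_INR|lra].
  - apply Rmult_le_pos; [apply pow_le, pos_INR|lra].
Qed.

Definition Csum (a : nat -> C) : C :=
  epsilon (inhabits (RtoC 0)) (fun l => is_series a l).

Lemma Csum_correct (a : nat -> C) : ex_series a -> is_series a (Csum a).
Proof. intros [l H]. unfold Csum. apply epsilon_spec. exists l. exact H. Qed.

Lemma series_norm_le (a : nat -> C) (b : nat -> R) la lb :
  is_series a la -> is_series b lb -> (forall n, Cmod (a n) <= b n) -> Cmod la <= lb.
Proof.
  intros Ha Hb Hab.
  assert (Hl : is_lim_seq (fun N => Cmod (sum_n a N)) (Cmod la)).
  { unfold is_lim_seq. simpl. eapply filterlim_comp; [exact Ha|]. apply (filterlim_norm la). }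
  assert (Hp : forall N, Cmod (sum_n a N) <= sum_n b N).
  { intros N. eapply Rle_trans. apply (norm_sum_n_m a 0 N).
    apply sum_n_m_le. intros k. apply Hab. }
  assert (Hb' : is_lim_seq (sum_n b) lb) by exact Hb.
  pose proof (is_lim_seq_le _ _ _ _ Hp Hl Hb') as H. simpl in H. exact H.
Qed.

Lemma is_series_sum_n (v : nat -> nat -> C) (s : nat -> C) M :
  (forall m, is_series (v m) (s m)) ->
  is_series (fun N => sum_n (fun m => v m N) M) (sum_n s M).
Proof.
  intros Hv. induction M as [|M IH].
  - rewrite sum_O. eapply is_series_ext; [|apply Hv]. intros N. rewrite sum_O. reflexivity.
  - rewrite sum_Sn. pose proof (is_series_plus _ _ _ _ IH (Hv (S M))) as H.
    eapply is_series_ext; [|exact H].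
    intros N. simpl. rewrite sum_Sn. reflexivity.
Qed.

Lemma Cplus_opp0 (x : C) : Cplus x (Copp (RtoC 0)) = x.
Proof. ring. Qed.

Lemma Cplus_opp_self (x : C) : Cplus x (Copp x) = RtoC 0.
Proof. ring. Qed.

Lemma shift0 m : forall (a : nat -> C) l, (forall k, (k < m)%nat -> a k = zero) ->
  is_series (fun n => a (n + m)%nat) l -> is_series a l.
Proof.
  induction m as [|m IH]; intros a l Hz Hs.
  - eapply is_series_ext; [|exact Hs]. intros n. simpl. f_equal. lia.
  - apply is_series_decr_1.
    assert (E : a O = RtoC 0) by (apply Hz; lia). rewrite E.
    change (is_series (fun k : nat => a (S k)) (Cplus l (Copp (RtoC 0)))).
    rewrite Cplus_opp0.
    apply (IH (fun k => a (S k))).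
    + intros k Hk. apply Hz. lia.
    + eapply is_series_ext; [|exact Hs]. intros n. simpl. replace (n + S m)%nat with (S (n + m)) by lia. reflexivity.
Qed.

Lemma shift0R m : forall (a : nat -> R) l, (forall k, (k < m)%nat -> a k = 0) ->
  is_series (fun n => a (n + m)%nat) l -> is_series a l.
Proof.
  induction m as [|m IH]; intros a l Hz Hs.
  - eapply is_series_ext; [|exact Hs]. intros n. simpl. f_equal. lia.
  - apply is_series_decr_1.
    assert (E : a O = 0) by (apply Hz; lia). rewrite E.
    assert (E2 : forall x : R, x + - 0 = x) by (intros; ring).
    change (is_series (fun k => a (S k)) (l + - 0)). rewrite E2.
    apply (IH (fun k => a (S k))).
    + intros k Hk. apply Hz. lia.
    + eapply is_series_ext; [|exact Hs]. intros n. simpl. replace (n + S m)%nat with (S (n + m)) by lia. reflexivity.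
Qed.

Lemma sum_n_m_nonneg (f : nat -> R) n m : (forall k, 0 <= f k) -> 0 <= sum_n_m f n m.
Proof.
  intros H. pose proof (sum_n_m_le (fun _ => 0) f n m H) as H1.
  rewrite (sum_n_m_const_zero (G:=R_AbelianMonoid)) in H1. exact H1.
Qed.

Lemma Rle_addl (a b : R) : 0 <= a -> b <= a + b.
Proof. intros; lra. Qed.

Lemma dbl (v : nat -> nat -> C) (s : nat -> C) (L : C) :
  (forall m N, (N < m)%nat -> v m N = RtoC 0) ->
  (forall m, is_series (v m) (s m)) ->
  ex_series (fun N => sum_n (fun m => Cmod (v m N)) N) ->
  is_series (fun N => sum_n (fun m => v m N) N) L ->
  is_series s L.
Proof.
  intros Hz Hv [Ds HD] HL. change R in Ds.
  set (d := fun N => sum_n (fun m => Cmod (v m N)) N) in *.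
  assert (Hb : forall M, Cmod (minus L (sum_n s M)) <= Ds - sum_n d M).
  { intros M.
    pose proof (is_series_sum_n v s M Hv) as HP.
    pose proof (is_series_minus _ _ _ _ HL HP) as Hdiff.
    set (e := fun N => if Nat.leb N M then 0 else d N).
    assert (He : is_series e (Ds - sum_n d M)).
    { apply (shift0R (S M)).
      - intros k Hk. unfold e. replace (Nat.leb k M) with true; [reflexivity|].
        symmetry. apply Nat.leb_le. lia.
      - eapply is_series_ext.
        2:{ apply (is_series_incr_n d (S M)); [lia|]. simpl.
            match goal with |- is_series _ ?x => replace x with Ds; [exact HD|] end.
            change (Ds = Ds - sum_n d M + sum_n d M); ring. }
        intros n. unfold e. replace (Nat.leb (n + S M) M) with false.
        + f_equal. lia.
        + symmetry. apply Nat.leb_gt. lia. }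
    apply (series_norm_le _ _ _ _ Hdiff He).
    intros N. cbv beta. unfold e. destruct (Nat.leb N M) eqn:EN.
    - apply Nat.leb_le in EN.
      rewrite (sum_zero_tail (fun m => v m N) N M).
      + set (X := sum_n (fun m => v m N) N).
        change (Cmod (Cplus X (Copp X)) <= 0). rewrite Cplus_opp_self. rewrite Cmod_0. lra.
      + intros m Hm. apply Hz. exact Hm.
      + exact EN.
    - apply Nat.leb_gt in EN.
      apply Rle_trans with (Cmod (sum_n_m (fun m => v m N) (S M) N)).
      { right. f_equal. symmetry. apply (sum_n_m_sum_n (G:=C_AbelianGroup)). lia. }
      eapply Rle_trans. apply (norm_sum_n_m (fun m => v m N)).
      unfold d. change (sum_n (fun m => Cmod (v m N)) N) with
        (sum_n_m (fun m => Cmod (v m N)) 0 N).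
      rewrite (sum_n_m_Chasles _ 0 M N) by lia.
      change (plus ?a ?b) with (a + b).
      pose proof (sum_n_m_nonneg (fun m => Cmod (v m N)) 0 M (fun k => Cmod_ge_0 _)).
      set (P1 := sum_n_m (fun m => Cmod (v m N)) 0 M) in *.
      set (P2 := sum_n_m (fun m => Cmod (v m N)) (S M) N).
      change (P2 <= P1 + P2). apply Rle_addl. exact H. }
  apply filterlim_locally. intros eps.
  assert (HD' := proj1 (filterlim_locally _ _) HD eps).
  eapply filter_imp; [|exact HD'].
  intros M HM. apply norm_compat1.
  change (minus (sum_n s M) L) with (Cminus (sum_n s M) L).
  change (ball Ds eps (sum_n d M)) with (Rabs (sum_n d M - Ds) < eps) in HM.
  specialize (Hb M). change (minus L (sum_n s M)) with (Cminus L (sum_n s M)) in Hb.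
  replace (Cminus (sum_n s M) L) with (Copp (Cminus L (sum_n s M))) by ring.
  change (norm (Copp (Cminus L (sum_n s M)))) with (Cmod (Copp (Cminus L (sum_n s M)))).
  rewrite Cmod_opp. apply Rabs_def2 in HM.
  change (sum_n d M - Ds < eps /\ - eps < sum_n d M - Ds) in HM.
  generalize (sum_n d M) HM Hb. intros t. change R in t. intros. lra.
Qed.

Definition Bnd (b : nat -> C) (R0 : R) :=
  forall rho, 0 <= rho < R0 -> exists M, forall n, Cmod (b n) * rho ^ n <= M.

Definition dseq (b : nat -> C) : nat -> C :=
  fun n => Cmult (RtoC (INR (S n))) (b (S n)).

Lemma series_term_bound (a : nat -> R) : ex_series a -> (forall n, 0 <= a n) ->
  exists B, forall n, a n <= B.
Proof.
  intros Ha Hp. exists (Series a). intros n.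
  assert (Hl : is_lim_seq (sum_n a) (Series a)) by exact (Series_correct _ Ha).
  apply Rle_trans with (sum_n a n).
  - destruct n as [|n].
    + rewrite sum_O. lra.
    + rewrite sum_Sn. change (a (S n) <= sum_n a n + a (S n)).
      pose proof (sum_n_m_nonneg a 0 n Hp) as H. change (0 <= sum_n a n) in H.
      generalize (sum_n a n) H. intros t. change R in t. intros. lra.
  - apply (is_lim_seq_incr_compare _ _ Hl). intros k. rewrite sum_Sn.
    change (sum_n a k <= sum_n a k + a (S k)).
    generalize (sum_n a k). intros t. change R in t. specialize (Hp (S k)). lra.
Qed.

Lemma ex_series_geomK (M q : R) : 0 <= q < 1 -> ex_series (fun n => M * q ^ n).
Proof.
  intros Hq. exists (M * / (1 - q)).
  apply (is_series_scal_l (K:=R_AbsRing) (V:=R_NormedModule) M (fun n => q ^ n)).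
  apply is_series_geom. rewrite Rabs_pos_eq; lra.
Qed.

Lemma ex_series_le_R (a b : nat -> R) : (forall n, Rabs (a n) <= b n) -> ex_series b -> ex_series a.
Proof. intros H Hb. apply (ex_series_le (K:=R_AbsRing) (V:=R_CompleteNormedModule) a b H Hb). Qed.

Lemma Bnd_geom b R0 rho : Bnd b R0 -> 0 <= rho < R0 ->
  exists M q, 0 <= M /\ 0 <= q < 1 /\ forall n, Cmod (b n) * rho ^ n <= M * q ^ n.
Proof.
  intros HB Hr. set (r' := (rho + R0) / 2).
  destruct (HB r' ltac:(unfold r'; lra)) as [M HM].
  assert (HM0 : 0 <= M).
  { specialize (HM O). simpl in HM. pose proof (Cmod_ge_0 (b O)). lra. }
  exists M, (rho / r'). split; [exact HM0|]. split.
  - assert (Hr' : 0 < r') by (unfold r'; lra). assert (rho < r') by (unfold r'; lra).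
    split; [apply Rdiv_le_0_compat; lra|].
    unfold Rdiv. apply (Rmult_lt_reg_r r'); [lra|]. rewrite Rmult_assoc, Rinv_l by lra. lra.
  - intros n. specialize (HM n).
    replace (rho ^ n) with (r' ^ n * (rho / r') ^ n).
    2: { rewrite <- Rpow_mult_distr. f_equal. field. unfold r'; lra. }
    pose proof (pow_le (rho / r') n ltac:(apply Rdiv_le_0_compat; unfold r'; lra)).
    pose proof (Cmod_ge_0 (b n)).
    rewrite <- Rmult_assoc. apply Rmult_le_compat_r; lra.
Qed.

Lemma Bnd_abs b R0 rho : Bnd b R0 -> 0 <= rho < R0 ->
  ex_series (fun n => Cmod (b n) * rho ^ n).
Proof.
  intros HB Hr. destruct (Bnd_geom b R0 rho HB Hr) as [M [q [HM [Hq H]]]].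
  apply ex_series_le_R with (b := fun n => M * q ^ n); [|apply ex_series_geomK; exact Hq].
  intros n. rewrite Rabs_pos_eq; [apply H|].
  apply Rmult_le_pos; [apply Cmod_ge_0|apply pow_le; lra].
Qed.

Lemma Bnd_ex b R0 z : Bnd b R0 -> Cmod z < R0 -> ex_series (fun n => Cmult (b n) (Cp z n)).
Proof.
  intros HB Hz.
  apply (ex_series_le (K:=C_AbsRing) (V:=C_CompleteNormedModule)) with
    (b := fun n => Cmod (b n) * Cmod z ^ n).
  - intros n. change (norm (Cmult (b n) (Cp z n))) with (Cmod (Cmult (b n) (Cp z n))).
    rewrite Cmod_mult, Cmod_Cp. lra.
  - apply (Bnd_abs b R0). exact HB. split; [apply Cmod_ge_0|exact Hz].
Qed.

Lemma pow_le1 q n : 0 <= q <= 1 -> q ^ n <= 1.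
Proof.
  intros Hq. induction n as [|n IH]; simpl; [lra|].
  pose proof (pow_le q n ltac:(lra)). nra.
Qed.

Lemma Bnd_shift b R0 rho : Bnd b R0 -> 0 <= rho < R0 ->
  exists K q, 0 <= K /\ 0 <= q < 1 /\ forall n, Cmod (b (S n)) * rho ^ n <= K * q ^ n.
Proof.
  intros HB Hr. set (r' := (rho + R0) / 2).
  assert (Hr' : 0 < r') by (unfold r'; lra). assert (Hrr : rho < r') by (unfold r'; lra).
  destruct (HB r' ltac:(unfold r' in *; lra)) as [M HM].
  assert (HM0 : 0 <= M).
  { specialize (HM O). simpl in HM. pose proof (Cmod_ge_0 (b O)). lra. }
  exists (M / r'), (rho / r'). split; [apply Rdiv_le_0_compat; lra|]. split.
  - split; [apply Rdiv_le_0_compat; lra|].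
    unfold Rdiv. apply (Rmult_lt_reg_r r'); [lra|]. rewrite Rmult_assoc, Rinv_l by lra. lra.
  - intros n. specialize (HM (S n)).
    assert (E : Cmod (b (S n)) * rho ^ n = (Cmod (b (S n)) * r' ^ (S n)) * ((rho / r') ^ n / r')).
    { unfold Rdiv. rewrite Rpow_mult_distr, pow_inv. simpl. field. split; [lra|]. apply pow_nonzero. lra. }
    rewrite E.
    replace (M / r' * (rho / r') ^ n) with (M * ((rho / r') ^ n / r')) by (field; lra).
    apply Rmult_le_compat_r; [|exact HM].
    apply Rdiv_le_0_compat; [apply pow_le, Rdiv_le_0_compat|]; lra.
Qed.

Lemma Bnd_n2 b R0 rho : Bnd b R0 -> 0 <= rho < R0 ->
  ex_series (fun n => Cmod (b (S n)) * INR n ^ 2 * rho ^ n).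
Proof.
  intros HB Hr. destruct (Bnd_shift b R0 rho HB Hr) as [K [q [HK [Hq H]]]].
  apply ex_series_le_R with (b := fun n => K * (INR n ^ 2 * q ^ n)).
  - intros n. pose proof (H n).
    assert (0 <= INR n ^ 2) by (apply pow_le, pos_INR).
    pose proof (pow_le rho n ltac:(lra)). pose proof (Cmod_ge_0 (b (S n))).
    rewrite Rabs_pos_eq.
    + replace (Cmod (b (S n)) * INR n ^ 2 * rho ^ n) with (INR n ^ 2 * (Cmod (b (S n)) * rho ^ n)) by ring.
      replace (K * (INR n ^ 2 * q ^ n)) with (INR n ^ 2 * (K * q ^ n)) by ring.
      apply Rmult_le_compat_l; lra.
    + apply Rmult_le_pos; [apply Rmult_le_pos|]; lra.
  - apply (ex_series_scal_l (K:=R_AbsRing) (V:=R_NormedModule) K).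
    apply ex_series_n2. exact Hq.
Qed.

Lemma Bnd_deriv b R0 : Bnd b R0 -> Bnd (dseq b) R0.
Proof.
  intros HB rho Hr. destruct (Bnd_shift b R0 rho HB Hr) as [K [q [HK [Hq H]]]].
  destruct (series_term_bound _ (ex_series_n2 q Hq)) as [B HBd].
  { intros n. apply Rmult_le_pos; [apply pow_le, pos_INR|apply pow_le; lra]. }
  exists (K * (B + 1)). intros n. unfold dseq. rewrite Cmod_mult, Cmod_R.
  rewrite Rabs_pos_eq by apply pos_INR.
  specialize (H n). specialize (HBd n).
  pose proof (pow_le1 q n ltac:(lra)). pose proof (pow_le q n ltac:(lra)).
  assert (Hn : INR (S n) <= INR n ^ 2 + 1).
  { rewrite S_INR. pose proof (pos_INR n). destruct n; [simpl; lra|].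
    assert (1 <= INR (S n)) by (rewrite S_INR; pose proof (pos_INR n); lra). nra. }
  assert (0 <= Cmod (b (S n)) * rho ^ n) by (apply Rmult_le_pos; [apply Cmod_ge_0|apply pow_le; lra]).
  apply Rle_trans with (INR (S n) * (K * q ^ n)).
  { rewrite Rmult_assoc. apply Rmult_le_compat_l; [apply pos_INR|lra]. }
  apply Rle_trans with ((INR n ^ 2 + 1) * (K * q ^ n)).
  { apply Rmult_le_compat_r; [apply Rmult_le_pos; lra|lra]. }
  replace ((INR n ^ 2 + 1) * (K * q ^ n)) with (K * (INR n ^ 2 * q ^ n + q ^ n)) by ring.
  apply Rmult_le_compat_l; lra.
Qed.

Definition Eq (w z : C) (n : nat) : C :=
  Cminus (Cminus (Cp w (S n)) (Cp z (S n)))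
         (Cmult (Cmult (RtoC (INR (S n))) (Cp z n)) (Cminus w z)).

Lemma Eq_rec w z n : Eq w z (S n) =
  Cplus (Cmult w (Eq w z n))
        (Cmult (Cmult (RtoC (INR (S n))) (Cp z n)) (Cmult (Cminus w z) (Cminus w z))).
Proof.
  unfold Eq. rewrite !Cp_S. rewrite (S_INR (S n)), RtoC_plus. unfold Cminus. ring.
Qed.

Lemma Eq_0 w z : Eq w z O = RtoC 0.
Proof. unfold Eq. rewrite !Cp_S, !Cp_0. change (INR 1) with 1. unfold Cminus. ring. Qed.

Lemma Eq_bound w z rho : 0 < rho -> Cmod w <= rho -> Cmod z <= rho ->
  forall n, rho * Cmod (Eq w z n) <= INR n ^ 2 * rho ^ n * Cmod (Cminus w z) ^ 2.
Proof.
  intros Hr Hw Hz n. set (d := Cmod (Cminus w z)).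
  assert (Hd : 0 <= d) by apply Cmod_ge_0.
  induction n as [|n IH].
  - rewrite Eq_0, Cmod_0. simpl. lra.
  - rewrite Eq_rec.
    eapply Rle_trans; [apply Rmult_le_compat_l; [lra|apply Cmod_triangle]|].
    rewrite !Cmod_mult, Cmod_R, Rabs_pos_eq by apply pos_INR. rewrite Cmod_Cp.
    fold d.
    assert (Hzn : Cmod z ^ n <= rho ^ n) by (apply pow_incr; split; [apply Cmod_ge_0|exact Hz]).
    pose proof (Cmod_ge_0 w). pose proof (Cmod_ge_0 z). pose proof (Cmod_ge_0 (Eq w z n)).
    pose proof (pos_INR n). pose proof (pow_le rho n ltac:(lra)).
    pose proof (pow_le (Cmod z) n ltac:(lra)).
    rewrite S_INR. simpl pow.
    set (x := INR n) in *. set (E := Cmod (Eq w z n)) in *. set (P := rho ^ n) in *.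
    set (Z := Cmod z ^ n) in *. set (W := Cmod w) in *.
    assert (G1 : rho * (W * E) <= rho * (rho * E)) by (apply Rmult_le_compat_l; nra).
    assert (G2 : (x + 1) * Z * (d * d) <= (x + 1) * P * (d * d)).
    { apply Rmult_le_compat_r; [nra|]. apply Rmult_le_compat_l; lra. }
    assert (G3 : rho * (rho * E) <= rho * (x ^ 2 * P * d ^ 2)) by (apply Rmult_le_compat_l; lra).
    assert (G4 : 0 <= x * (rho * P * (d * d))) by (apply Rmult_le_pos; [lra|]; apply Rmult_le_pos; [apply Rmult_le_pos|]; nra).
    assert (G5 : rho * ((x + 1) * Z * (d * d)) <= rho * ((x + 1) * P * (d * d))) by (apply Rmult_le_compat_l; lra).
    replace (rho * (W * E + (x + 1) * Z * (d * d))) with (rho * (W * E) + rho * ((x + 1) * Z * (d * d))) by ring.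
    replace ((x + 1) * ((x + 1) * 1) * (rho * P) * (d * (d * 1))) with
      (rho * (x ^ 2 * P * d ^ 2) + rho * ((x + 1) * P * (d * d)) + x * (rho * P * (d * d))) by ring.
    lra.
Qed.

Lemma is_series_drop0 (a : nat -> C) l : a O = RtoC 0 -> is_series a l ->
  is_series (fun n => a (S n)) l.
Proof.
  intros H0 H. apply is_series_incr_1. rewrite H0.
  change (is_series a (Cplus l (RtoC 0))). rewrite Cplus_0_r. exact H.
Qed.

Lemma series_nonneg (a : nat -> R) l : is_series a l -> (forall n, 0 <= a n) -> 0 <= l.
Proof.
  intros H Hp.
  assert (Hl : is_lim_seq (sum_n a) l) by exact H.
  assert (H0 : is_lim_seq (fun _ => 0) 0) by apply is_lim_seq_const.
  pose proof (is_lim_seq_le (fun _ => 0) (sum_n a) 0 l) as G. simpl in G. apply G; auto.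
  intros n. apply (sum_n_m_nonneg a 0 n Hp).
Qed.

Lemma ps_deriv b R0 z : Bnd b R0 -> Cmod z < R0 ->
  is_derive (fun w => Csum (fun n => Cmult (b n) (Cp w n))) z
            (Csum (fun n => Cmult (dseq b n) (Cp z n))).
Proof.
  intros HB Hz.
  set (f := fun w => Csum (fun n => Cmult (b n) (Cp w n))).
  set (l := Csum (fun n => Cmult (dseq b n) (Cp z n))).
  assert (Hf : forall w, Cmod w < R0 -> is_series (fun n => Cmult (b n) (Cp w n)) (f w)).
  { intros w Hw. apply Csum_correct. eapply Bnd_ex; eauto. }
  assert (Hl : is_series (fun n => Cmult (dseq b n) (Cp z n)) l).
  { apply Csum_correct. eapply Bnd_ex; [apply Bnd_deriv; eauto|exact Hz]. }
  set (rho := (Cmod z + R0) / 2).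
  assert (Hz0 := Cmod_ge_0 z).
  assert (Hrz : Cmod z < rho) by (unfold rho; lra).
  assert (HrR : rho < R0) by (unfold rho; lra).
  assert (Hr0 : 0 < rho) by lra.
  pose proof (Bnd_n2 b R0 rho HB ltac:(lra)) as Hn2.
  set (K := Series (fun n => Cmod (b (S n)) * INR n ^ 2 * rho ^ n)).
  assert (HK : is_series (fun n => Cmod (b (S n)) * INR n ^ 2 * rho ^ n) K)
    by (apply Series_correct; exact Hn2).
  assert (HK0 : 0 <= K).
  { apply (series_nonneg _ _ HK). intros n.
    apply Rmult_le_pos; [apply Rmult_le_pos; [apply Cmod_ge_0|apply pow_le, pos_INR]|apply pow_le; lra]. }
  assert (Hest : forall w, Cmod w <= rho ->
    Cmod (Cminus (Cminus (f w) (f z)) (Cmult (Cminus w z) l)) <= Cmod (Cminus w z) ^ 2 * (K / rho)).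
  { intros w Hw.
    pose proof (Hf w ltac:(lra)) as Sw. pose proof (Hf z Hz) as Sz.
    pose proof (is_series_minus _ _ _ _ Sw Sz) as S1.
    pose proof (fun H0 => is_series_drop0 _ _ H0 S1) as S1'. specialize (S1' ltac:(cbv beta; rewrite !Cp_0; change (Cplus (Cmult (b 0%nat) (RtoC 1)) (Copp (Cmult (b 0%nat) (RtoC 1))) = RtoC 0); apply Cplus_opp_self)).
    pose proof (is_series_scal (Cminus w z) _ _ Hl) as S2.
    pose proof (is_series_minus _ _ _ _ S1' S2) as S3.
    pose proof (is_series_scal_r (Cmod (Cminus w z) ^ 2 / rho) _ _ HK) as SB.
    pose proof (series_norm_le _ _ _ _ S3 SB) as HH.
    replace (Cmod (Cminus w z) ^ 2 * (K / rho)) with (K * (Cmod (Cminus w z) ^ 2 / rho)) by (field; lra).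
    apply HH. clear HH. intros n. cbv beta.
    change (Cmod (Cplus (Cplus (Cmult (b (S n)) (Cp w (S n))) (Copp (Cmult (b (S n)) (Cp z (S n)))))
                 (Copp (Cmult (Cminus w z) (Cmult (dseq b n) (Cp z n)))))
       <= Cmod (b (S n)) * INR n ^ 2 * rho ^ n * (Cmod (Cminus w z) ^ 2 / rho)).
    replace (Cplus (Cplus (Cmult (b (S n)) (Cp w (S n))) (Copp (Cmult (b (S n)) (Cp z (S n)))))
                 (Copp (Cmult (Cminus w z) (Cmult (dseq b n) (Cp z n)))))
      with (Cmult (b (S n)) (Eq w z n)) by (unfold Eq, dseq, Cminus; ring).
    rewrite Cmod_mult.
    pose proof (Eq_bound w z rho Hr0 Hw ltac:(lra) n) as HE.
    pose proof (Cmod_ge_0 (b (S n))) as Hb0.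
    replace (Cmod (b (S n)) * INR n ^ 2 * rho ^ n * (Cmod (Cminus w z) ^ 2 / rho))
      with (Cmod (b (S n)) * ((INR n ^ 2 * rho ^ n * Cmod (Cminus w z) ^ 2) / rho)) by (field; lra).
    apply Rmult_le_compat_l; [exact Hb0|].
    apply (Rmult_le_reg_l rho); [lra|].
    replace (rho * (INR n ^ 2 * rho ^ n * Cmod (Cminus w z) ^ 2 / rho))
      with (INR n ^ 2 * rho ^ n * Cmod (Cminus w z) ^ 2) by (field; lra). exact HE. }
  unfold is_derive, filterdiff. split; [apply is_linear_scal_l|].
  intros x Hx. apply (is_filter_lim_locally_unique (K:=C_AbsRing) (V:=AbsRing_NormedModule C_AbsRing)) in Hx. subst x.
  intros eps. apply (locally_le_locally_norm (K:=C_AbsRing) (V:=AbsRing_NormedModule C_AbsRing)).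
  set (del := Rmin (rho - Cmod z) (eps * rho / (K + 1))).
  assert (Hdel : 0 < del).
  { unfold del. apply Rmin_pos; [lra|]. apply Rdiv_lt_0_compat; [|lra].
    apply Rmult_lt_0_compat; [apply cond_pos|lra]. }
  exists (mkposreal del Hdel). intros y Hy.
  change (Cmod (Cminus y z) < del) in Hy.
  change (Cmod (Cminus (Cminus (f y) (f z)) (Cmult (Cminus y z) l)) <= eps * Cmod (Cminus y z)).
  assert (Hy1 : Cmod y <= rho).
  { replace y with (Cplus z (Cminus y z)) by (unfold Cminus; ring).
    eapply Rle_trans; [apply Cmod_triangle|]. pose proof (Rmin_l (rho - Cmod z) (eps * rho / (K + 1))).
    fold del in H. lra. }
  eapply Rle_trans; [apply Hest; exact Hy1|].
  set (d := Cmod (Cminus y z)) in *.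
  assert (Hd0 : 0 <= d) by apply Cmod_ge_0.
  assert (Hd2 : d <= eps * rho / (K + 1)).
  { pose proof (Rmin_r (rho - Cmod z) (eps * rho / (K + 1))). fold del in H. lra. }
  assert (Hk : d * (K / rho) <= eps).
  { apply Rle_trans with (eps * rho / (K + 1) * (K / rho)).
    - apply Rmult_le_compat_r; [apply Rdiv_le_0_compat; lra|exact Hd2].
    - replace (eps * rho / (K + 1) * (K / rho)) with (eps * (K / (K + 1))) by (field; lra).
      pose proof (cond_pos eps).
      assert (K / (K + 1) <= 1).
      { unfold Rdiv. apply (Rmult_le_reg_r (K + 1)); [lra|].
        rewrite Rmult_assoc, Rinv_l by lra. lra. }
      nra. }
  replace (d ^ 2 * (K / rho)) with (d * (d * (K / rho))) by ring.
  rewrite (Rmult_comm eps d). apply Rmult_le_compat_l; lra.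
Qed.

Lemma exp_mul_INR c n : exp (c * INR n) = exp c ^ n.
Proof.
  induction n as [|n IH].
  - simpl. rewrite Rmult_0_r. apply exp_0.
  - rewrite S_INR, Rmult_plus_distr_l, Rmult_1_r, exp_plus, IH. simpl. ring.
Qed.

Lemma term_le_sum (a : nat -> R) : (forall n, 0 <= a n) ->
  forall N k, (k <= N)%nat -> a k <= sum_n a N.
Proof.
  intros Hp N. induction N as [|N IH]; intros k Hk.
  - assert (k = O) by lia. subst. rewrite sum_O. apply Rle_refl.
  - rewrite sum_Sn. change (a k <= sum_n a N + a (S N)).
    pose proof (sum_n_m_nonneg a 0 N Hp) as H0. change (0 <= sum_n a N) in H0.
    destruct (Nat.eq_dec k (S N)) as [->|Hne].
    + generalize (sum_n a N) H0. intros t. change R in t. intros. lra.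
    + specialize (IH k ltac:(lia)). specialize (Hp (S N)).
      generalize (sum_n a N) H0 IH. intros t. change R in t. intros. lra.
Qed.

Lemma sum_n_scal_R (c : R) (a : nat -> R) N :
  sum_n (fun k => c * a k) N = c * sum_n a N.
Proof.
  induction N as [|N IH].
  - rewrite !sum_O. reflexivity.
  - rewrite !sum_Sn, IH. change (c * sum_n a N + c * a (S N) = c * (sum_n a N + a (S N))).
    generalize (sum_n a N). intros t. change R in t. ring.
Qed.

Lemma global_bound (f : nat -> C) c : 0 <= c -> bigO_exp c f ->
  exists K, 0 <= K /\ forall n, Cmod (f n) <= K * exp c ^ n.
Proof.
  intros Hc [K [N HK]].
  set (K' := Rabs K + sum_n (fun k => Cmod (f k)) N).
  assert (Hs0 : 0 <= sum_n (fun k => Cmod (f k)) N).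
  { apply (sum_n_m_nonneg (fun k => Cmod (f k)) 0 N). intros; apply Cmod_ge_0. }
  assert (HA : 1 <= exp c) by (pose proof (exp_ineq1_le c); lra).
  exists K'. split.
  - unfold K'. pose proof (Rabs_pos K). generalize (sum_n (fun k => Cmod (f k)) N) Hs0.
    intros t. change R in t. intros. lra.
  - intros n. pose proof (pow_le1 (exp c) n) as _H.
    assert (HAn : 1 <= exp c ^ n).
    { clear _H. induction n as [|n IH]; simpl; [lra|]. nra. }
    destruct (le_lt_dec N n) as [HNn|HnN].
    + specialize (HK n HNn). rewrite exp_mul_INR in HK.
      apply Rle_trans with (Rabs K * exp c ^ n).
      * eapply Rle_trans; [exact HK|]. apply Rmult_le_compat_r; [lra|apply Rle_abs].
      * apply Rmult_le_compat_r; [lra|]. unfold K'.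
        generalize (sum_n (fun k => Cmod (f k)) N) Hs0. intros t. change R in t. intros. lra.
    + pose proof (term_le_sum (fun k => Cmod (f k)) (fun k => Cmod_ge_0 _) N n ltac:(lia)) as Ht.
      cbv beta in Ht.
      apply Rle_trans with K'.
      * unfold K'. pose proof (Rabs_pos K). generalize (sum_n (fun k => Cmod (f k)) N) Ht.
        intros t. change R in t. intros. lra.
      * assert (0 <= K').
        { unfold K'. pose proof (Rabs_pos K). generalize (sum_n (fun k => Cmod (f k)) N) Hs0.
          intros t. change R in t. intros. lra. }
        nra.
Qed.

Definition Dm (g : nat -> C) (m n : nat) : C :=
  Cmult (g (n + m)%nat) (RtoC (INR (fact (n + m)) / INR (fact n))).

Definition Gd (g : nat -> C) (m : nat) (z : C) : C :=
  Csum (fun n => Cmult (Dm g m n) (Cp z n)).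

Lemma INR_fact_pos n : 0 < INR (fact n).
Proof. apply lt_0_INR, lt_O_fact. Qed.

Lemma Dm_S g m : Dm g (S m) = dseq (Dm g m).
Proof.
  apply functional_extensionality. intros n. unfold Dm, dseq.
  replace (n + S m)%nat with (S n + m)%nat by lia.
  change (fact (S n)) with (S n * fact n)%nat. rewrite mult_INR.
  pose proof (INR_fact_pos n). pose proof (pos_INR n).
  replace (INR (fact (S n + m)) / INR (fact n)) with
    (INR (S n) * (INR (fact (S n + m)) / (INR (S n) * INR (fact n)))).
  2:{ rewrite S_INR. field. lra. }
  rewrite RtoC_mult. ring.
Qed.

Lemma Dm_0 g n : Dm g 0 n = g n.
Proof.
  unfold Dm. rewrite Nat.add_0_r. pose proof (INR_fact_pos n).
  replace (INR (fact n) / INR (fact n)) with 1 by (field; lra). apply Cmult_1_r.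
Qed.

Lemma Bnd_Dm g Kg A : 1 <= A -> (forall n, Cmod (g n) <= Kg * A ^ n) ->
  forall m, Bnd (Dm g m) (/ A).
Proof.
  intros HA Hg m. induction m as [|m IH].
  - intros rho Hr. exists Kg. intros n. rewrite Dm_0.
    assert (HAr : 0 <= A * rho < 1).
    { split; [apply Rmult_le_pos; lra|]. 
      apply (Rmult_lt_reg_r (/ A)); [apply Rinv_0_lt_compat; lra|].
      replace (A * rho * / A) with rho by (field; lra). lra. }
    pose proof (pow_le1 (A * rho) n ltac:(lra)).
    pose proof (Hg n).
    assert (HK : 0 <= Kg).
    { specialize (Hg O). simpl in Hg. pose proof (Cmod_ge_0 (g O)). lra. }
    pose proof (pow_le rho n ltac:(lra)).
    apply Rle_trans with (Kg * A ^ n * rho ^ n).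
    + apply Rmult_le_compat_r; lra.
    + rewrite Rmult_assoc, <- Rpow_mult_distr. 
      pose proof (pow_le (A * rho) n ltac:(lra)). nra.
  - rewrite Dm_S. apply Bnd_deriv. exact IH.
Qed.

Lemma RtoC_neq0 x : x <> 0 -> RtoC x <> RtoC 0.
Proof. intros H E. apply H. apply (f_equal fst) in E. exact E. Qed.

Lemma fact_ratio N m : (m <= N)%nat ->
  INR (fact N) / INR (fact (N - m)) = INR (binom N m) * INR (fact m).
Proof.
  intros HmN. pose proof (binom_fact (N - m) m) as H.
  replace (N - m + m)%nat with N in H by lia.
  apply (f_equal INR) in H. rewrite !mult_INR in H.
  pose proof (INR_fact_pos (N - m)). rewrite <- H. field. lra.
Qed.

Lemma v_form g h z N m : (m <= N)%nat ->
  Cdiv (Cmult (Cmult (Cmult (Dm g m (N - m)) (Cp z (N - m))) (fdiff m h 0)) (Cp z m))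
       (RtoC (INR (fact m)))
  = Cmult (Cmult (g N) (Cp z N)) (Cmult (castC (binom N m)) (fdiff m h 0)).
Proof.
  intros HmN. unfold Dm. replace (N - m + m)%nat with N by lia.
  rewrite fact_ratio by exact HmN.
  replace (Cp z N) with (Cmult (Cp z (N - m)) (Cp z m))
    by (rewrite <- Cp_plus; f_equal; lia).
  unfold castC. rewrite RtoC_mult.
  field. apply RtoC_neq0. pose proof (INR_fact_pos m). lra.
Qed.

Lemma sum_n_Cmult_l (a : C) (u : nat -> C) N :
  sum_n (fun k => Cmult a (u k)) N = Cmult a (sum_n u N).
Proof.
  induction N as [|N IH].
  - rewrite !sum_O. reflexivity.
  - rewrite !sum_Sn, IH. change (Cplus (Cmult a (sum_n u N)) (Cmult a (u (S N))) =
       Cmult a (Cplus (sum_n u N) (u (S N)))).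
    generalize (sum_n u N). intros t. change C in t. ring.
Qed.

Lemma Cmult_swap23 (a b d : C) : Cmult (Cmult a d) b = Cmult (Cmult a b) d.
Proof. ring. Qed.

Lemma part2 (g h : nat -> C) (c : R) : 0 <= c -> bigO_exp c g -> bigO_exp c h ->
    exists r : R, 0 < r /\
    exists Gd : nat -> C -> C,
      (forall z : C, Cmod z < r ->
         is_series (fun n : nat => Cmult (g n) (Cp z n)) (Gd O z)) /\
      (forall (m : nat) (z : C), Cmod z < r ->
         @is_derive C_AbsRing C_NormedModule (Gd m) z (Gd (S m) z)) /\
      (forall z : C, Cmod z < r ->
         exists L : C,
           is_series (fun n : nat => Cmult (Cmult (g n) (h n)) (Cp z n)) L /\
           is_series (fun m : nat =>
              Cdiv (Cmult (Cmult (Gd m z) (fdiff m h 0%nat)) (Cp z m))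
                   (RtoC (INR (Stdlib.Arith.Factorial.fact m)))) L).
Proof.
  intros Hc Hg Hh.
  destruct (global_bound g c Hc Hg) as [Kg [HKg Hgb]].
  destruct (global_bound h c Hc Hh) as [Kh [HKh Hhb]].
  set (A := exp c) in *.
  assert (HA : 1 <= A) by (unfold A; pose proof (exp_ineq1_le c); lra).
  set (r := / (A * (1 + 2 * A))).
  assert (HAA : 0 < A * (1 + 2 * A)) by nra.
  assert (Hr0 : 0 < r) by (apply Rinv_0_lt_compat; lra).
  assert (HrA : r <= / A) by (apply Rinv_le_contravar; nra).
  exists r. split; [exact Hr0|]. exists (Gd g).
  assert (HB := Bnd_Dm g Kg A HA Hgb).
  split; [|split].
  - intros z Hz. assert (Hz' : Cmod z < / A) by lra.
    pose proof (Csum_correct _ (Bnd_ex _ _ _ (HB 0%nat) Hz')) as H.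
    eapply is_series_ext; [|exact H]. intros n. cbv beta. rewrite Dm_0. reflexivity.
  - intros m z Hz.
    pose proof (ps_deriv (Dm g m) (/ A) z (HB m) ltac:(lra)) as H.
    unfold Gd. rewrite Dm_S. exact H.
  - intros z Hz. assert (Hz' : Cmod z < / A) by lra.
    set (v := fun m N => if Nat.leb m N then
        Cdiv (Cmult (Cmult (Cmult (Dm g m (N - m)) (Cp z (N - m))) (fdiff m h 0)) (Cp z m))
             (RtoC (INR (fact m))) else RtoC 0).
    set (s := fun m => Cdiv (Cmult (Cmult (Gd g m z) (fdiff m h 0)) (Cp z m)) (RtoC (INR (fact m)))).
    assert (Hdiag : forall N, sum_n (fun m => v m N) N = Cmult (Cmult (g N) (h N)) (Cp z N)).
    { intros N.
      rewrite (sum_n_ext_loc _ (fun m => Cmult (Cmult (g N) (Cp z N)) (Cmult (castC (binom N m)) (fdiff m h 0)))).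
      2:{ intros m Hm. unfold v. replace (Nat.leb m N) with true by (symmetry; apply Nat.leb_le; lia).
          apply v_form; lia. }
      transitivity (Cmult (Cmult (g N) (Cp z N)) (h (N + 0)%nat)).
      + rewrite (newton h N 0). apply sum_n_Cmult_l.
      + rewrite Nat.add_0_r. apply Cmult_swap23. }
    set (q := A * (1 + 2 * A) * Cmod z).
    assert (Hq : 0 <= q < 1).
    { pose proof (Cmod_ge_0 z). split; [unfold q; apply Rmult_le_pos; lra|].
      unfold q. apply (Rmult_lt_reg_r r); [lra|].
      replace (A * (1 + 2 * A) * Cmod z * r) with (Cmod z * (A * (1 + 2 * A) * r)) by ring.
      unfold r. rewrite Rinv_r by lra. fold r. lra. }
    assert (Hbound : forall N, sum_n (fun m => Cmod (v m N)) N <= Kg * Kh * q ^ N).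
    { intros N.
      apply Rle_trans with (sum_n (fun m => Kg * Kh * (A * Cmod z) ^ N * (INR (binom N m) * (2 * A) ^ m)) N).
      - apply sum_n_m_le. intros m.
        assert (HP : 0 <= Kg * Kh * (A * Cmod z) ^ N).
        { apply Rmult_le_pos; [apply Rmult_le_pos; lra|apply pow_le]. pose proof (Cmod_ge_0 z). nra. }
        destruct (le_lt_dec m N) as [HmN|HNm].
        + unfold v. replace (Nat.leb m N) with true by (symmetry; apply Nat.leb_le; lia).
          rewrite v_form by exact HmN. rewrite !Cmod_mult, Cmod_Cp. unfold castC. rewrite Cmod_R.
          rewrite Rabs_pos_eq by apply pos_INR.
          pose proof (Hgb N). pose proof (fdiff_bound h Kh A HA Hhb m 0) as Hf. rewrite Nat.add_0_l in Hf.
          pose proof (pos_INR (binom N m)). pose proof (Cmod_ge_0 z). pose proof (Cmod_ge_0 (g N)).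
          pose proof (Cmod_ge_0 (fdiff m h 0)).
          pose proof (pow_le (Cmod z) N ltac:(lra)).
          replace (Kg * Kh * (A * Cmod z) ^ N * (INR (binom N m) * (2 * A) ^ m))
            with ((Kg * A ^ N) * Cmod z ^ N * (INR (binom N m) * (Kh * 2 ^ m * A ^ m)))
            by (rewrite !Rpow_mult_distr; ring).
          apply Rmult_le_compat.
          * apply Rmult_le_pos; lra.
          * apply Rmult_le_pos; lra.
          * apply Rmult_le_compat_r; lra.
          * apply Rmult_le_compat_l; lra.
        + unfold v. replace (Nat.leb m N) with false by (symmetry; apply Nat.leb_gt; lia).
          rewrite Cmod_0, binom_big by lia. simpl INR. lra.
      - apply Rle_trans with (Kg * Kh * (A * Cmod z) ^ N *
                              sum_n (fun m => INR (binom N m) * (2 * A) ^ m) N).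
        + right. apply (sum_n_scal_R (Kg * Kh * (A * Cmod z) ^ N) (fun m => INR (binom N m) * (2 * A) ^ m)).
        + rewrite <- binom_sum. unfold q. rewrite !Rpow_mult_distr. right. ring. }
    assert (Habs : ex_series (fun N => sum_n (fun m => Cmod (v m N)) N)).
    { apply ex_series_le_R with (b := fun N => Kg * Kh * q ^ N); [|apply ex_series_geomK; exact Hq].
      intros N. rewrite Rabs_pos_eq; [apply Hbound|].
      apply (sum_n_m_nonneg (fun m => Cmod (v m N)) 0 N). intros; apply Cmod_ge_0. }
    assert (Hex : ex_series (fun N => sum_n (fun m => v m N) N)).
    { apply (ex_series_le (K:=C_AbsRing) (V:=C_CompleteNormedModule)) with
        (b := fun N => sum_n (fun m => Cmod (v m N)) N); [|exact Habs].
      intros N. apply (norm_sum_n_m (fun m => v m N) 0 N). }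
    set (L := Csum (fun N => sum_n (fun m => v m N) N)).
    pose proof (Csum_correct _ Hex) as HL. fold L in HL.
    exists L. split.
    + eapply is_series_ext; [|exact HL]. intros N. cbv beta. exact (Hdiag N).
    + change (is_series s L).
      apply (dbl v s L); [| |exact Habs|exact HL].
      * intros m N HNm. unfold v. replace (Nat.leb m N) with false by (symmetry; apply Nat.leb_gt; lia).
        reflexivity.
      * intros m. apply (shift0 m).
        { intros k Hk. unfold v. replace (Nat.leb m k) with false by (symmetry; apply Nat.leb_gt; lia).
          reflexivity. }
        pose proof (Csum_correct _ (Bnd_ex _ _ _ (HB m) Hz')) as HG.
        set (cst := Cdiv (Cmult (fdiff m h 0) (Cp z m)) (RtoC (INR (fact m)))).
        pose proof (is_series_scal cst _ _ HG) as HG2.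
        assert (Hf0 : RtoC (INR (fact m)) <> RtoC 0) by (apply RtoC_neq0; pose proof (INR_fact_pos m); lra).
        assert (Es : s m = Cmult cst (Gd g m z)).
        { unfold s, cst. field. exact Hf0. }
        rewrite Es. eapply is_series_ext; [|exact HG2].
        intros n. cbv beta. unfold v. replace (Nat.leb m (n + m)) with true by (symmetry; apply Nat.leb_le; lia).
        replace (n + m - m)%nat with n by lia. change (scal ?a ?b) with (Cmult a b).
        unfold cst. match goal with |- ?a = ?b => change (@eq C a b) end. field. exact Hf0.
Qed.

Lemma bigO_shift c f : bigO_exp c f -> bigO_exp c (fun n => f (S n)).
Proof.
  intros [K [N HK]]. exists (K * exp c), N. intros n Hn.
  specialize (HK (S n) ltac:(lia)). rewrite S_INR, Rmult_plus_distr_l, Rmult_1_r, exp_plus in HK.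
  rewrite Rmult_assoc, (Rmult_comm (exp c)). exact HK.
Qed.

Theorem mainTheorem8 :
  (forall (g h : nat -> C) (c : R), 0 <= c -> bigO_exp c g -> bigO_exp c h ->
    exists r : R, 0 < r /\
    exists Gd : nat -> C -> C,
      (forall z : C, Cmod z < r ->
         is_series (fun n : nat => Cmult (g (S n)) (Cp z n)) (Gd O z)) /\
      (forall (m : nat) (z : C), Cmod z < r ->
         @is_derive C_AbsRing C_NormedModule (Gd m) z (Gd (S m) z)) /\
      (forall z : C, Cmod z < r ->
         exists L : C,
           is_series (fun n : nat => Cmult (Cmult (g (S n)) (h (S n))) (Cp z n)) L /\
           is_series (fun m : nat =>
              Cdiv (Cmult (Cmult (Gd m z) (fdiff m h 1%nat)) (Cp z m))
                   (RtoC (INR (Stdlib.Arith.Factorial.fact m)))) L))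
  /\
  (forall (g h : nat -> C) (c : R), 0 <= c -> bigO_exp c g -> bigO_exp c h ->
    exists r : R, 0 < r /\
    exists Gd : nat -> C -> C,
      (forall z : C, Cmod z < r ->
         is_series (fun n : nat => Cmult (g n) (Cp z n)) (Gd O z)) /\
      (forall (m : nat) (z : C), Cmod z < r ->
         @is_derive C_AbsRing C_NormedModule (Gd m) z (Gd (S m) z)) /\
      (forall z : C, Cmod z < r ->
         exists L : C,
           is_series (fun n : nat => Cmult (Cmult (g n) (h n)) (Cp z n)) L /\
           is_series (fun m : nat =>
              Cdiv (Cmult (Cmult (Gd m z) (fdiff m h 0%nat)) (Cp z m))
                   (RtoC (INR (Stdlib.Arith.Factorial.fact m)))) L)).
Proof.
  split.
  - intros g h c Hc Hg Hh.
    destruct (part2 (fun n => g (S n)) (fun n => h (S n)) c Hc (bigO_shift c g Hg) (bigO_shift c h Hh))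
      as [r [Hr [G [H1 [H2 H3]]]]].
    exists r. split; [exact Hr|]. exists G. split; [exact H1|]. split; [exact H2|].
    intros z Hz. destruct (H3 z Hz) as [L [HL1 HL2]]. exists L. split; [exact HL1|].
    eapply is_series_ext; [|exact HL2]. intros m. cbv beta. rewrite fdiff_shift. reflexivity.
  - exact part2.
Qed.
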